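(* Let $w=(w_n)$ be any bounded sequence of positive real numbers. The unilateral weighted backward shift $B_w:\ell^\infty(\mathbb N)\to\ell^\infty(\mathbb N)$, $(B_wx)_n=w_n x_{n+1}$ ($n\in\mathbb N$), is not recurrent; and for a bounded sequence of positive reals $w=(w_n)_{n\in\mathbb Z}$, the bilateral weighted backward shift $B_w:\ell^\infty(\mathbb Z)\to\ell^\infty(\mathbb Z)$, $(B_wx)_n=w_n x_{n+1}$ ($n\in\mathbb Z$), is not recurrent.
   Context: $\ell^\infty(\mathbb N)$, $\ell^\infty(\mathbb Z)$ are the Banach spaces of bounded complex sequences with the supremum norm. An operator $T$ on a Banach space $X$ is recurrent if for every non-empty open $U\subset X$ there is a positive integer $k$ with $U\cap T^{-k}(U)\neq\emptyset$. *)

(* Defs.v *)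
From Stdlib Require Import Reals ZArith.
From Coquelicot Require Import Coquelicot.
Open Scope R_scope.

Definition linf_bounded {I : Type} (x : I -> C) : Prop :=
  exists M : R, forall n, Cmod (x n) <= M.

(* Open sup-norm ball: sup_n |x_n - y_n| < r, written out as
   "there is s < r bounding all |x_n - y_n|". *)
Definition linf_ball {I : Type} (x : I -> C) (r : R) (y : I -> C) : Prop :=
  exists s : R, s < r /\ forall n, Cmod (Cminus (x n) (y n)) <= s.

Definition linf_open {I : Type} (U : (I -> C) -> Prop) : Prop :=
  (forall x, U x -> linf_bounded x) /\
  forall x, U x -> exists r : R, 0 < r /\
    forall y, linf_bounded y -> linf_ball x r y -> U y.

Definition linf_recurrent {I : Type} (T : (I -> C) -> (I -> C)) : Prop :=
  forall U : (I -> C) -> Prop, linf_open U -> (exists x, U x) ->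
    exists k : nat, (1 <= k)%nat /\ exists x, U x /\ U (Nat.iter k T x).

Definition uni_bshift (w : nat -> R) (x : nat -> C) : nat -> C :=
  fun n => Cmult (RtoC (w n)) (x (S n)).

Definition bi_bshift (w : Z -> R) (x : Z -> C) : Z -> C :=
  fun n => Cmult (RtoC (w n)) (x (n + 1)%Z).

(* Main.v *)
Require Import Defs.
From Stdlib Require Import Reals ZArith Lia Lra.
From Coquelicot Require Import Coquelicot.
Open Scope R_scope.

Lemma key {I : Type} (T : (I -> C) -> (I -> C)) (y : I -> C) :
  linf_bounded y ->
  (forall k x, (1 <= k)%nat -> exists i j c, 0 < c /\ y i = RtoC 1 /\
      y j = RtoC (-1) /\ Nat.iter k T x i = Cmult (RtoC c) (x j)) ->
  ~ linf_recurrent T.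
Proof.
  intros Hy HT Hrec.
  set (U := fun x : I -> C => linf_bounded x /\ linf_ball y (1/2) x).
  destruct (Hrec U) as [k [Hk [x [[_ [s [Hs Hx]]] [_ [s' [Hs' Hx']]]]]]].
  - split. { intros x [Hb _]; exact Hb. }
    intros x [_ [s [Hs Hx]]]. exists (1/2 - s). split. lra.
    intros z Hz [s' [Hs' Hz']]. split. exact Hz.
    exists (s + s'). split. lra. intro n.
    replace (Cminus (y n) (z n)) with (Cplus (Cminus (y n) (x n)) (Cminus (x n) (z n))) by ring.
    eapply Rle_trans. apply Cmod_triangle. specialize (Hx n); specialize (Hz' n). lra.
  - exists y. split. exact Hy. exists 0. split. lra. intro n.
    replace (Cminus (y n) (y n)) with (RtoC 0) by ring. rewrite Cmod_0. lra.
  - destruct (HT k x Hk) as [i [j [c [Hc [Hi [Hj He]]]]]].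
    specialize (Hx j). specialize (Hx' i). rewrite He, Hi in Hx'. rewrite Hj in Hx.
    pose proof (re_le_Cmod (Cminus (RtoC (-1)) (x j))) as A.
    pose proof (re_le_Cmod (Cminus (RtoC 1) (Cmult (RtoC c) (x j)))) as B.
    simpl in A, B. apply Rabs_le_between in A. apply Rabs_le_between in B.
    assert (fst (x j) < 0) by lra. rewrite Rmult_0_l in B.
    assert (c * fst (x j) < 0) by nra. lra.
Qed.

Lemma iter_uni w (Hw : forall n, 0 < w n) k x : forall n, exists c, 0 < c /\
  Nat.iter k (uni_bshift w) x n = Cmult (RtoC c) (x (n + k)%nat).
Proof.
  induction k; intro n.
  - exists 1. split. lra. simpl. rewrite Nat.add_0_r. ring.
  - simpl. destruct (IHk (S n)) as [c [Hc E]]. exists (w n * c). split.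
    apply Rmult_lt_0_compat; auto.
    unfold uni_bshift at 1. rewrite E. replace (S n + k)%nat with (n + S k)%nat by lia.
    rewrite RtoC_mult. ring.
Qed.

Lemma iter_bi w (Hw : forall n, 0 < w n) k x : forall n, exists c, 0 < c /\
  Nat.iter k (bi_bshift w) x n = Cmult (RtoC c) (x (n + Z.of_nat k)%Z).
Proof.
  induction k; intro n.
  - exists 1. split. lra. simpl. rewrite Z.add_0_r. ring.
  - simpl. destruct (IHk (n + 1)%Z) as [c [Hc E]]. exists (w n * c). split.
    apply Rmult_lt_0_compat; auto.
    unfold bi_bshift at 1. rewrite E. replace (n + 1 + Z.of_nat k)%Z with (n + Z.of_nat (S k))%Z by lia.
    rewrite RtoC_mult. rewrite <- Cmult_assoc. reflexivity.
Qed.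

Theorem theorem5p1 :
  (forall w : nat -> R,
     (forall n, 0 < w n) -> (exists M : R, forall n, w n <= M) ->
     ~ linf_recurrent (uni_bshift w)) /\
  (forall w : Z -> R,
     (forall n, 0 < w n) -> (exists M : R, forall n, w n <= M) ->
     ~ linf_recurrent (bi_bshift w)).
Proof.
  split.
  - intros w Hw _.
    apply (key _ (fun n => match n with O => RtoC 1 | _ => RtoC (-1) end)).
    + exists 1. intros [|n]; rewrite Cmod_R; unfold Rabs; destruct Rcase_abs; lra.
    + intros k x Hk. destruct (iter_uni w Hw k x 0) as [c [Hc E]].
      exists O, k, c. split; [exact Hc|]. split; [reflexivity|].
      split. destruct k; [lia|reflexivity]. exact E.
  - intros w Hw _.
    apply (key _ (fun n => if Z.eq_dec n 0 then RtoC 1 else RtoC (-1))).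
    + exists 1. intros n; destruct (Z.eq_dec n 0); rewrite Cmod_R; unfold Rabs; destruct Rcase_abs; lra.
    + intros k x Hk. destruct (iter_bi w Hw k x 0%Z) as [c [Hc E]].
      exists 0%Z, (0 + Z.of_nat k)%Z, c. split; [exact Hc|]. split.
      { destruct (Z.eq_dec 0 0); [reflexivity|lia]. }
      split. { destruct (Z.eq_dec (0 + Z.of_nat k) 0); [lia|reflexivity]. } exact E.
Qed.
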